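(* Let $\mathfrak g$ be the Lie algebra of the isometry group of a rank $1$ symmetric space $M$ of noncompact type, and let $\mathcal N$ be the space defined below. Then: (1) if $M=\mathbb H^n$ ($n\ge2$), then $\mathfrak n=\mathfrak g_\alpha\cong\mathbb R^{n-1}$ and $\mathcal N=\{h\in\mathrm{Sym}_2\mathbb R^{n-1}:\mathrm{tr}\,h=0\}$; (2) if $M=\mathbb{CH}^{2n}$ (real dimension $2n$, $n\ge2$), then $\mathfrak n=\mathfrak g_\alpha\oplus\mathfrak g_{2\alpha}\cong\mathbb C^{n-1}\oplus\mathbb R$, and, viewing $\mathbb C^{n-1}$ as a real vector space with $J$ the multiplication by $i$, $\mathcal N=\{h\in\mathrm{Sym}_2\mathbb C^{n-1}:Jh+hJ=0\}$ (extended by zero on $\mathfrak g_{2\alpha}$); (3) if $M$ is the quaternionic hyperbolic space $\mathbb{HH}^{4n}$ ($n\ge2$) or the octonionic hyperbolic plane $\mathbb{OH}^{16}$, then $\mathcal N=\{0\}$.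
   Context: Notation: $\mathfrak g=\mathfrak p\oplus\mathfrak k$ Cartan decomposition with involution $\sigma$, Killing form $\langle\cdot,\cdot\rangle$, maximal abelian $\mathfrak a\subset\mathfrak p$ (one-dimensional), positive roots $\alpha$ (and $2\alpha$ in the non-real cases), $\mathfrak n=\bigoplus_{\beta\in\Delta^+}\mathfrak g_\beta$ with inner product $(x,y)=-\langle x,\sigma y\rangle$. Symmetric bilinear forms on the orthogonal complement of $\mathfrak a$ in $\mathfrak p$ are identified with $(\cdot,\cdot)$-self-adjoint endomorphisms of $\mathfrak n$ via $x\mapsto\frac1{\sqrt2}(x-\sigma x)$. $\mathcal N$ is the set of self-adjoint endomorphisms $h$ of $\mathfrak n$ such that (a) $h(\mathfrak g_\beta)\subset\mathfrak g_\beta$ for every positive root $\beta$; (b) $h[x,y]=[hx,y]+[x,hy]$ for all $x,y\in\mathfrak n$ (i.e. $h$ is a derivation of $\mathfrak n$); (c) $\sum_{\beta\in\Delta^+}\mathrm{tr}(h|_{\mathfrak g_\beta})\,\beta=0$ in $\mathfrak a^*$. Models: with $\mathbb K\in\{\mathbb R,\mathbb C,\mathbb H,\mathbb O\}$, $\mathfrak g_\alpha=\mathbb K^{n-1}$ (with $n=2$ for $\mathbb O$), $\mathfrak g_{2\alpha}=\mathrm{Im}\,\mathbb K$, and $[v,w]=2\,\mathrm{Im}\sum_i\bar v_iw_i$ for $v,w\in\mathfrak g_\alpha$. *)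

(* Defs.v *)
From HB Require Import structures.
From mathcomp Require Import all_boot all_order all_algebra.
Set Implicit Arguments. Unset Strict Implicit. Unset Printing Implicit Defensive.
Import Order.TTheory GRing.Theory Num.Theory.
Local Open Scope ring_scope.

(* Cayley-Dickson algebras of level l (R, C, H, O for l = 0,1,2,3), real dimension 2^l,
   with basis e_0 = 1, e_1, ..., e_{2^l - 1}.  Convention (a,b)(c,d) = (ac - conj(d) b, d a + b conj(c)).
   The index i is split as (low bit = "second component" flag, i./2 = index at level l-1).
   For basis vectors, e_a e_b = (-1)^(cd_sign l a b) e_(a xor b). *)
Fixpoint cd_sign (l a b : nat) : bool :=
  match l with
  | 0 => false
  | l'.+1 =>
    let la := a./2 in let lb := b./2 in
    match odd a, odd b with
    | false, false => cd_sign l' la lb              (* (p,0)(q,0) = (pq,0)       *)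
    | false, true  => cd_sign l' lb la              (* (p,0)(0,q) = (0,qp)       *)
    | true,  false => (lb != 0%N) (+) cd_sign l' la lb   (* (0,p)(q,0) = (0,p conj q)  *)
    | true,  true  => ~~ ((lb != 0%N) (+) cd_sign l' lb la) (* (0,p)(0,q) = (-(conj q) p,0) *)
    end
  end.

(* Elements of K (with dim K = p.+1 = 2^l) are row vectors of coordinates. *)
Definition Kprod (R : ringType) (l p : nat) (x y : 'rV[R]_p.+1) : 'rV[R]_p.+1 :=
  \row_(k < p.+1) \sum_(i < p.+1) \sum_(j < p.+1)
     (if Nat.lxor i j == (k : nat) then (-1) ^+ cd_sign l i j * (x 0 i * y 0 j) else 0).

Definition Kconj (R : ringType) (p : nat) (x : 'rV[R]_p.+1) : 'rV[R]_p.+1 :=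
  \row_(k < p.+1) (if k == ord0 then x 0 k else - x 0 k).

(* g_alpha = K^{n'} : an element v is an n' x dim K matrix (row i = v_i in K).
   g_{2alpha} = Im K = 'rV_p (coordinate k <-> basis vector e_(k+1)).
   Bracket [v,w] = 2 Im sum_i conj(v_i) w_i. *)
Definition brK (R : ringType) (l p n' : nat) (v w : 'M[R]_(n', p.+1)) : 'rV[R]_p :=
  \row_(k < p) (2 * (\sum_(i < n') Kprod l (Kconj (row i v)) (row i w)) 0 (lift ord0 k)).

(* action of an endomorphism of g_alpha, given by its matrix in the coordinates mxvec
   (row-vector convention: x |-> x *m A). *)
Definition actA (R : ringType) (p n' : nat) (A : 'M[R]_(n' * p.+1)) (v : 'M[R]_(n', p.+1))
  : 'M[R]_(n', p.+1) := vec_mx (mxvec v *m A).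

(* The set N: a self-adjoint endomorphism h of n preserving each root space (a) is a pair
   (A on g_alpha, B on g_{2alpha}) of symmetric matrices (the coordinates above are
   orthonormal for (.,.) up to a positive factor on each root space);
   (b) h is a derivation; (c) tr(h|g_alpha) alpha + tr(h|g_{2alpha}) 2alpha = 0. *)
Definition inN (R : ringType) (l p n' : nat) (A : 'M[R]_(n' * p.+1)) (B : 'M[R]_p) : Prop :=
  [/\ A^T = A, B^T = B,
      (forall v w : 'M[R]_(n', p.+1),
          brK l (actA A v) w + brK l v (actA A w) = brK l v w *m B)
    & \tr A + 2 * \tr B = 0].

(* Complex structure J on C^{n'} (= multiplication by i), as a real matrix in the mxvec
   coordinates: (a + b i) i = -b + a i. *)
Definition mulJ (R : ringType) (n' : nat) (v : 'M[R]_(n', 2)) : 'M[R]_(n', 2) :=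
  \matrix_(i < n', k < 2) (if k == ord0 then - v i ord_max else v i ord0).

Definition Jmx (R : ringType) (n' : nat) : 'M[R]_(n' * 2) :=
  lin1_mx (fun x : 'rV[R]_(n' * 2) => mxvec (mulJ (vec_mx x))).
Arguments Jmx {R} n'.

(* Main.v *)
Require Import Defs.
From HB Require Import structures.
From mathcomp Require Import all_boot all_order all_algebra.

Import Order.TTheory GRing.Theory Num.Theory.
Local Open Scope ring_scope.

Definition gz (l a b k : nat) : int :=
  if Nat.lxor a b == k.+1 then (if cd_sign l a b (+) (a != 0%N) then -2 else 2) else 0.
Definition dotf (n : nat) (f g : nat -> nat -> int) (i j : nat) : int :=
  foldr (fun c acc => f i c * g c j + acc) 0 (iota 0 n).
Definition table n (f : nat -> nat -> int) := [seq [seq f i j | j <- iota 0 n] | i <- iota 0 n].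
Definition tabl (L : seq (seq int)) i j := nth 0 (nth [::] L i) j.
Definition eqf n (f g : nat -> nat -> int) :=
  all (fun i => all (fun j => f i j == g i j) (iota 0 n)) (iota 0 n).
Definition cliff l p := all (fun k => all (fun m =>
   eqf p.+1 (fun a b => dotf p.+1 (fun x y => gz l x y k) (fun x y => gz l x y m) a b
                      + dotf p.+1 (fun x y => gz l x y m) (fun x y => gz l x y k) a b)
            (fun a b => if (k == m) && (a == b) then -8 else 0)) (iota 0 p)) (iota 0 p).
Lemma c1 : cliff 1 1. Proof. vm_compute. reflexivity. Qed.
Lemma c2 : cliff 2 3. Proof. vm_compute. reflexivity. Qed.
Lemma c3 : cliff 3 7. Proof. vm_compute. reflexivity. Qed.
Definition g l k := fun x y => gz l x y k.
Definition mt n f g := tabl (table n (dotf n f g)).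

Section MX.
Variable R : realFieldType.
Definition MX n (f : nat -> nat -> int) : 'M[R]_n := \matrix_(i, j) (f i j)%:~R.

Lemma foldr_sum (F : nat -> int) s :
  (foldr (fun c acc => F c + acc) 0 s)%:~R = \sum_(c <- s) (F c)%:~R :> R.
Proof. elim: s => [|x s IH]; rewrite ?big_nil ?big_cons //=; by rewrite rmorphD -IH. Qed.

Lemma MX_mul n f g : MX n f *m MX n g = MX n (dotf n f g).
Proof.
apply/matrixP=> i j; rewrite !mxE /dotf.
rewrite (foldr_sum (fun c => f i c * g c j)).
rewrite (_ : iota 0 n = index_iota 0 n); last by rewrite /index_iota subn0.
rewrite big_mkord.
by apply: eq_bigr => c _; rewrite !mxE rmorphM.
Qed.

Lemma MX_add n f g : MX n f + MX n g = MX n (fun i j => f i j + g i j).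
Proof. by apply/matrixP=> i j; rewrite !mxE rmorphD. Qed.

Lemma MX_tab n f : MX n f = MX n (tabl (table n f)).
Proof.
apply/matrixP=> i j; rewrite !mxE /tabl /table.
rewrite (nth_map 0%N) ?size_iota // nth_iota // (nth_map 0%N) ?size_iota //.
by rewrite nth_iota.
Qed.

Lemma MX_multab n f g : MX n f *m MX n g = MX n (tabl (table n (dotf n f g))).
Proof. by rewrite MX_mul MX_tab. Qed.

Lemma eqfP n f g : eqf n f g -> MX n f = MX n g.
Proof.
move=> /allP H; apply/matrixP=> i j; rewrite !mxE.
have := H i; rewrite mem_iota /= ltn_ord => /(_ isT) /allP H2.
by rewrite (eqP (H2 j _)) // mem_iota /= ltn_ord.
Qed.

Lemma MX_scalar n (c : int) : MX n (fun i j => if i == j then c else 0) = (c%:~R)%:M.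
Proof.
apply/matrixP=> i j; rewrite !mxE.
case: (eqVneq i j) => [->|H]; first by rewrite !eqxx.
by rewrite ifN //= mulr0n.
Qed.
End MX.

Section Om.
Variable R : realFieldType.
Definition G (l p : nat) (k : nat) : 'M[R]_p.+1 := MX R p.+1 (fun a b => gz l a b k).
Definition Om l p n' (k : 'I_p) : 'M[R]_(n' * p.+1) := lin_mulmxr (G l p k).


Lemma Lmul m n (X Y : 'M[R]_n) :
  lin_mulmxr X *m lin_mulmxr Y = lin_mulmxr (X *m Y) :> 'M_(m * n).
Proof.
apply/row_matrixP=> i; rewrite !rowE mulmxA !mul_rV_lin /=.
by rewrite mxvecK mulmxA.
Qed.

Lemma Lscal m n (c : R) : lin_mulmxr (c%:M : 'M_n) = c%:M :> 'M_(m * n).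
Proof.
apply/row_matrixP=> i; rewrite !rowE !mul_rV_lin /= mul_mx_scalar linearZ /=.
by rewrite vec_mxK mul_mx_scalar.
Qed.

Lemma cliff_G l p : cliff l p -> forall k m : 'I_p,
  G l p k *m G l p m + G l p m *m G l p k = (if k == m then -8 else 0)%:M.
Proof.
move=> /allP H k m; rewrite /G !MX_mul MX_add.
have := H k; rewrite mem_iota /= ltn_ord => /(_ isT) /allP H2.
have := H2 m; rewrite mem_iota /= ltn_ord => /(_ isT) /eqfP ->.
have -> : (k == m) = (k == m :> nat) by [].
case: (k == m :> nat).
  by rewrite /= (MX_scalar R _ (-8)) rmorphN /=.
by apply/matrixP=> i j; rewrite !mxE mul0rn.
Qed.

Lemma Om_cliff l p n' : cliff l p -> forall k m : 'I_p,
  Om l p n' k *m Om l p n' m + Om l p n' m *m Om l p n' k = (if k == m then -8 else 0)%:M.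
Proof. by move=> H k m; rewrite /Om !Lmul -linearD /= cliff_G // Lscal. Qed.
End Om.

Section BrK.
Variable R : realFieldType.

Lemma dotvec m n (X Y : 'M[R]_(m,n)) :
  (mxvec X *m (mxvec Y)^T) 0 0 = \sum_i \sum_j X i j * Y i j.
Proof.
rewrite mxE (reindex _ (curry_mxvec_bij _ _)) /= pair_big /=.
by apply: eq_bigr => [[i j]] _ /=; rewrite !mxE !mxvecE.
Qed.

Lemma brK_Om l p n' (v w : 'M[R]_(n', p.+1)) (k : 'I_p) :
  brK l v w 0 k = (mxvec v *m Om R l p n' k *m (mxvec w)^T) 0 0.
Proof.
rewrite /Om mul_vec_lin /= dotvec /brK !mxE summxE mulr_sumr.
apply: eq_bigr => i _; rewrite !mxE.
under [RHS]eq_bigr => b _ do rewrite !mxE mulr_suml.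
rewrite exchange_big mulr_sumr; apply: eq_bigr => a _.
rewrite mulr_sumr; apply: eq_bigr => b _.
rewrite !mxE lift0 /gz.
case: ifP => _; last by rewrite mulr0 rmorph0 mulr0 mul0r.
have E : forall x : 'I_p.+1, ((x:nat) != 0%N) = ~~ (x == ord0) by [].
rewrite E.
case: (cd_sign _ _ _); case: (_ == ord0) => /=;
  rewrite ?expr1 ?expr0 ?mulN1r ?mul1r ?rmorphN /= ?mulrN ?mulNr ?opprK //;
  idtac.
all: by rewrite rmorph_nat ?mulrN ?opprK mulrAC (mulrC 2).
Qed.

Lemma quad_delta N (M : 'M[R]_N) i j :
  ((delta_mx 0 i : 'rV[R]_N) *m M *m (delta_mx 0 j : 'rV[R]_N)^T) 0 0 = M i j.
Proof. by rewrite -rowE trmx_delta -colE !mxE. Qed.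

Lemma addE p (X Y : 'rV[R]_p) k : (X + Y) 0 k = X 0 k + Y 0 k.
Proof. by rewrite mxE. Qed.

Lemma addE2 (X Y : 'M[R]_1) : (X + Y) 0 0 = X 0 0 + Y 0 0.
Proof. by rewrite mxE. Qed.

Lemma keyA l p n' (A : 'M[R]_(n' * p.+1)) v w k : A^T = A ->
  (brK l (actA A v) w + brK l v (actA A w)) 0 k =
  (mxvec v *m (A *m Om R l p n' k + Om R l p n' k *m A) *m (mxvec w)^T) 0 0.
Proof.
move=> HA; rewrite addE !brK_Om /actA !vec_mxK mulmxDr mulmxDl addE2.
by rewrite trmx_mul HA !mulmxA.
Qed.

Lemma keyB l p n' (B : 'M[R]_p) (v w : 'M[R]_(n', p.+1)) k :
  (brK l v w *m B) 0 k =
  (mxvec v *m (\sum_m B m k *: Om R l p n' m) *m (mxvec w)^T) 0 0.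
Proof.
rewrite mxE mulmx_sumr mulmx_suml summxE; apply: eq_bigr => m _.
rewrite brK_Om -scalemxAr -scalemxAl.
by rewrite [RHS]mxE mulrC.
Qed.

Lemma deriv_iff l p n' (A : 'M[R]_(n' * p.+1)) (B : 'M[R]_p) : A^T = A ->
  (forall v w, brK l (actA A v) w + brK l v (actA A w) = brK l v w *m B) <->
  (forall k, A *m Om R l p n' k + Om R l p n' k *m A = \sum_m B m k *: Om R l p n' m).
Proof.
move=> HA; split=> H.
  move=> k; apply/matrixP=> i j.
  rewrite -[LHS](quad_delta _ _ i j) -[RHS](quad_delta _ _ i j).
  rewrite -(vec_mxK (delta_mx 0 i)) -(vec_mxK (delta_mx 0 j)).
  by rewrite -keyA // -keyB H.
move=> v w; apply/rowP=> k.
by rewrite keyA // keyB H.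
Qed.
End BrK.
Section Abs.
Variable R : realFieldType.

Lemma abstract_lemma (N q : nat) (J : 'I_q -> 'M[R]_N) (A : 'M_N) (B : 'M[R]_q) :
 (0 < N)%N ->
 (forall j k, J j *m J k + J k *m J j = (if j == k then -8 else 0)%:M) ->
 (forall k, A *m J k + J k *m A = \sum_m B m k *: J m) ->
 \tr A + 2 * \tr B = 0 ->
 B = 0 /\ (forall k, A *m J k + J k *m A = 0).
Proof.
move=> HN Hc Heq Htr.
have trJ j m : 2 * \tr (J j *m J m) = (if j == m then -8 else 0) *+ N.
  by rewrite -[RHS]mxtrace_scalar -Hc mxtraceD (mxtrace_mulC (J m)) mulr_natl mulr2n.
have key j k : (if j == k then -8 else 0) * \tr A = B j k * \tr (J j *m J j).
  have := congr1 (fun X => \tr (J j *m X)) (Heq k) => /=.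
  rewrite mulmxDr mxtraceD mulmxA (mxtrace_mulC (J j *m A)) mulmxA -mxtraceD.
  rewrite !mulmxA -mulmxDl (Hc k j) mul_scalar_mx mxtraceZ (eq_sym k j) => ->.
  rewrite mulmx_sumr raddf_sum (bigD1 j) //= big1 ?addr0.
    by rewrite -scalemxAr mxtraceZ.
  move=> m Hm; rewrite -scalemxAr mxtraceZ.
  have := trJ j m; rewrite eq_sym (negbTE Hm) mul0rn => /eqP.
  by rewrite mulf_eq0 pnatr_eq0 /= => /eqP ->; rewrite mulr0.
have t_def j : 2 * \tr (J j *m J j) = -8 *+ N by rewrite trJ eqxx.
have Hmain j k : (B j k *+ N) * -8 = 2 * ((if j == k then -8 else 0) * \tr A).
  by rewrite key mulrCA t_def mulrnAl mulrnAr.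
have n8 : (-8 : R) != 0 by rewrite oppr_eq0 pnatr_eq0.
have HN0 : (N == 0%N) = false by apply/negbTE; rewrite -lt0n.
have HBd j : B j j *+ N = 2 * \tr A.
  apply: (mulIf n8); rewrite Hmain eqxx.
  by rewrite mulrCA mulrC.
have HBo j k : j != k -> B j k = 0.
  move=> Hjk; have := Hmain j k; rewrite (negbTE Hjk) mul0r mulr0 => /eqP.
  by rewrite mulf_eq0 (negbTE n8) orbF mulrn_eq0 HN0 /= => /eqP.
have HtrA : \tr A = - (2 * \tr B) by apply/eqP; rewrite -addr_eq0 Htr.
have HtrB : \tr B *+ N = (2 * \tr A) *+ q.
  rewrite (_ : \tr B = \sum_i B i i) // -sumrMnl (eq_bigr (fun _ => 2 * \tr A)) ?sumr_const ?card_ord //.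
have trB0 : \tr B = 0.
  move: HtrB; rewrite HtrA !mulr_natl -mulrnA mulNrn => /eqP.
  rewrite -subr_eq0 opprK -mulrnA -mulrnDr mulrn_eq0 /=.
  by rewrite addn_eq0 HN0 /= => /eqP.
have trA0 : \tr A = 0 by rewrite HtrA trB0 mulr0 oppr0.
have B0 : B = 0.
  apply/matrixP=> j k; rewrite mxE.
  case: (eqVneq j k) => [<-|Hjk]; last exact: HBo.
  have := HBd j; rewrite trA0 mulr0 => /eqP.
  by rewrite mulrn_eq0 HN0 /= => /eqP.
split=> // k; rewrite Heq big1 // => m _.
by rewrite B0 mxE scale0r.
Qed.
End Abs.


Lemma p2 : eqf 4 (mt 4 (mt 4 (g 2 0) (g 2 1)) (g 2 2)) (fun a b => if a == b then 8 else 0).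
Proof. vm_compute. reflexivity. Qed.
Lemma p3 : eqf 8 (mt 8 (mt 8 (mt 8 (mt 8 (mt 8 (mt 8 (g 3 0) (g 3 1)) (g 3 2)) (g 3 3)) (g 3 4)) (g 3 5)) (g 3 6))
   (fun a b => if a == b then - 128 else 0).
Proof. vm_compute. reflexivity. Qed.

Section Levels.
Variable R : realFieldType.

Lemma chain N (A X Y : 'M[R]_N) (s : R) :
  A *m Y = s *: (Y *m A) -> A *m X + X *m A = 0 -> A *m (Y *m X) = (- s) *: (Y *m X *m A).
Proof.
move=> HY HX; rewrite mulmxA HY -scalemxAl -mulmxA.
have -> : A *m X = - (X *m A) by apply/eqP; rewrite -addr_eq0 HX.
by rewrite mulmxN scalerN scaleNr mulmxA.
Qed.

Lemma chain_end N (A P : 'M[R]_N) (c : R) :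
  c != 0 -> P = c%:M -> A *m P = (- 1) *: (P *m A) -> A = 0.
Proof.
move=> Hc -> H; move: H; rewrite mul_mx_scalar mul_scalar_mx scaleN1r => /eqP.
rewrite -addr_eq0 -scalerDr scaler_eq0 (negbTE Hc) /= => /eqP HA.
have : (A *+ 2 == 0) by rewrite mulr2n HA.
by rewrite -scaler_nat scaler_eq0 pnatr_eq0 /= => /eqP.
Qed.

Lemma start N (A X : 'M[R]_N) : A *m X + X *m A = 0 -> A *m X = (-1) *: (X *m A).
Proof. by move=> H; rewrite scaleN1r; apply/eqP; rewrite -addr_eq0 H. Qed.

Lemma G2prod : G R 2 3 0 *m G R 2 3 1 *m G R 2 3 2 = 8%:M.
Proof.
rewrite /G !MX_multab (eqfP R 4 _ (fun a b => if a == b then 8 else 0) p2).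
by rewrite MX_scalar rmorph_nat.
Qed.

Lemma G3prod : G R 3 7 0 *m G R 3 7 1 *m G R 3 7 2 *m G R 3 7 3 *m G R 3 7 4
   *m G R 3 7 5 *m G R 3 7 6 = (-128)%:M.
Proof.
rewrite /G !MX_multab (eqfP R 8 _ (fun a b => if a == b then -128 else 0) p3).
by rewrite MX_scalar rmorphN rmorph_nat.
Qed.

Lemma zero_inN l p n' : inN (R:=R) l (0 : 'M_(n' * p.+1)) (0 : 'M_p).
Proof.
split; rewrite ?trmx0 //; last by rewrite !mxtrace0 mulr0 addr0.
apply: (proj2 (deriv_iff R l p n' 0 0 (trmx0 _ _ _))) => k.
rewrite mul0mx mulmx0 addr0 big1 // => m _; by rewrite mxE scale0r.
Qed.

End Levels.


Section Main.
Variable R : realFieldType.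

Lemma mulJ_G n' (v : 'M[R]_(n', 2)) : v *m G R 1 1 0 = 2 *: mulJ v.
Proof.
apply/matrixP=> i c; rewrite !mxE big_ord_recl big_ord1 !mxE.
case: c => [[|[|//]]] Hc /=; rewrite /gz /=.
  rewrite (_ : lift ord0 ord0 = ord_max); last exact: val_inj.
  by rewrite rmorph0 mulr0 add0r rmorphN rmorph_nat !mulrN mulrC.
by rewrite mulr0z mulr0 addr0 rmorph_nat mulrC.
Qed.

Lemma Om1J n' : Om R 1 1 n' ord0 = 2 *: Jmx n'.
Proof.
apply/matrixP=> i j; rewrite /Om /lin_mulmxr /lin_mx /Jmx.
rewrite [LHS]mxE [RHS]mxE [X in _ * X]mxE /= mulJ_G linearZ /=.
by rewrite [LHS]mxE.
Qed.

Lemma level0 n (A : 'M[R]_(n.-1 * 1)) (B : 'M[R]_0) :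
  inN 0 A B <-> (A^T = A /\ \tr A = 0).
Proof.
have trB : \tr B = 0 by rewrite /mxtrace big_ord0.
split.
  by case=> HA _ _; rewrite trB mulr0 addr0.
case=> HA HtrA; split => //.
- by apply/matrixP => -[].
- by move=> v w; apply/rowP => -[].
- by rewrite trB HtrA mulr0 addr0.
Qed.

Lemma level1 n (Hn : (2 <= n)%N) (A : 'M[R]_(n.-1 * 2)) (B : 'M[R]_1) :
  inN 1 A B <-> [/\ A^T = A, Jmx n.-1 *m A + A *m Jmx n.-1 = 0 & B = 0].
Proof.
have HN : (0 < n.-1 * 2)%N by rewrite muln_gt0 andbT -ltnS prednK // ltnW.
split.
  case=> HA HB Hd Htr.
  have Heq := (deriv_iff R 1 1 n.-1 A B HA).1 Hd.
  have [B0 Hk] := abstract_lemma R _ _ _ A B HN (Om_cliff R 1 1 n.-1 c1) Heq Htr.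
  split=> //.
  have := Hk ord0; rewrite Om1J -scalemxAr -scalemxAl -scalerDr => /eqP.
  by rewrite scaler_eq0 pnatr_eq0 /= addrC => /eqP.
case=> HA HJ ->.
have HAO : A *m Om R 1 1 n.-1 ord0 + Om R 1 1 n.-1 ord0 *m A = 0.
  by rewrite Om1J -scalemxAr -scalemxAl -scalerDr addrC HJ scaler0.
split => //.
- by rewrite trmx0.
- apply: (proj2 (deriv_iff R 1 1 n.-1 A 0 HA)) => k.
  by rewrite ord1 HAO big1 // => m _; rewrite mxE scale0r.
- rewrite mxtrace0 mulr0 addr0.
  set O := Om R 1 1 n.-1 ord0 in HAO *.
  have Hc := Om_cliff R 1 1 n.-1 c1 ord0 ord0; rewrite eqxx -/O in Hc.
  have HOA : O *m A = - (A *m O) by apply/eqP; rewrite -addr_eq0 addrC HAO.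
  have t0 : \tr (O *m O *m A) = 0.
    have E : \tr (O *m O *m A) = - \tr (O *m O *m A).
      rewrite -{1}mulmxA mxtrace_mulC HOA mulNmx raddfN /= -mulmxA mxtrace_mulC.
      by congr (- _); rewrite !mulmxA mxtrace_mulC mulmxA.
    have : \tr (O *m O *m A) *+ 2 == 0 by rewrite mulr2n {1}E addNr.
    by rewrite mulrn_eq0 /= => /eqP.
  have := congr1 (fun X => \tr (X *m A)) Hc.
  rewrite /= mulmxDl mxtraceD t0 addr0 mul_scalar_mx mxtraceZ => /esym/eqP.
  by rewrite mulf_eq0 oppr_eq0 pnatr_eq0 /= => /eqP.
Qed.

Lemma level_zero l p n' (A : 'M[R]_(n' * p.+1)) (B : 'M[R]_p) :
  cliff l p -> (0 < n' * p.+1)%N ->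
  (forall A : 'M[R]_(n' * p.+1),
     (forall k, A *m Om R l p n' k + Om R l p n' k *m A = 0) -> A = 0) ->
  inN l A B <-> (A = 0 /\ B = 0).
Proof.
move=> Hcl HN Hz; split.
  case=> HA HB Hd Htr.
  have Heq := (deriv_iff R l p n' A B HA).1 Hd.
  have [B0 Hk] := abstract_lemma R _ _ _ A B HN (Om_cliff R l p n' Hcl) Heq Htr.
  by split=> //; apply: Hz.
by case=> -> ->; apply: zero_inN.
Qed.

Lemma anti2 n' (A : 'M[R]_(n' * 4)) :
  (forall k, A *m Om R 2 3 n' k + Om R 2 3 n' k *m A = 0) -> A = 0.
Proof.
move=> Hk.
have H0 := start R _ _ _ (Hk (@Ordinal 3 0 isT)).
have H1 := chain R _ _ _ _ _ H0 (Hk (@Ordinal 3 1 isT)).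
have H2 := chain R _ _ _ _ _ H1 (Hk (@Ordinal 3 2 isT)).
rewrite !opprK in H2.
apply: (chain_end R _ A _ 8 _ _ H2); first by rewrite pnatr_eq0.
by rewrite /Om !Lmul (G2prod R) Lscal.
Qed.

Lemma anti3 (A : 'M[R]_(1 * 8)) :
  (forall k, A *m Om R 3 7 1 k + Om R 3 7 1 k *m A = 0) -> A = 0.
Proof.
move=> Hk.
have H0 := start R _ _ _ (Hk (@Ordinal 7 0 isT)).
have H1 := chain R _ _ _ _ _ H0 (Hk (@Ordinal 7 1 isT)).
have H2 := chain R _ _ _ _ _ H1 (Hk (@Ordinal 7 2 isT)).
have H3 := chain R _ _ _ _ _ H2 (Hk (@Ordinal 7 3 isT)).
have H4 := chain R _ _ _ _ _ H3 (Hk (@Ordinal 7 4 isT)).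
have H5 := chain R _ _ _ _ _ H4 (Hk (@Ordinal 7 5 isT)).
have H6 := chain R _ _ _ _ _ H5 (Hk (@Ordinal 7 6 isT)).
rewrite !opprK in H6.
apply: (chain_end R _ A _ (-128) _ _ H6); first by rewrite oppr_eq0 pnatr_eq0.
by rewrite /Om !Lmul (G3prod R) Lscal.
Qed.

End Main.

Theorem lemma5p12 (R : realFieldType) :
  (* (1) real hyperbolic space H^n: K = R (level 0), n = g_alpha = R^{n-1} *)
  (forall n : nat, (2 <= n)%N ->
     forall (A : 'M[R]_(n.-1 * 1)) (B : 'M[R]_0),
       inN 0 A B <-> (A^T = A /\ \tr A = 0)) /\
  (* (2) complex hyperbolic space CH^{2n}: K = C (level 1), n = C^{n-1} (+) R *)
  (forall n : nat, (2 <= n)%N ->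
     forall (A : 'M[R]_(n.-1 * 2)) (B : 'M[R]_1),
       inN 1 A B <-> [/\ A^T = A, Jmx n.-1 *m A + A *m Jmx n.-1 = 0 & B = 0]) /\
  (* (3a) quaternionic hyperbolic space HH^{4n}: K = H (level 2), n = H^{n-1} (+) Im H *)
  (forall n : nat, (2 <= n)%N ->
     forall (A : 'M[R]_(n.-1 * 4)) (B : 'M[R]_3),
       inN 2 A B <-> (A = 0 /\ B = 0)) /\
  (* (3b) octonionic hyperbolic plane OH^16: K = O (level 3), n = O (+) Im O *)
  (forall (A : 'M[R]_(1 * 8)) (B : 'M[R]_7),
       inN 3 A B <-> (A = 0 /\ B = 0)).
Proof.
split; [|split; [|split]].
- by move=> n _ A B; apply: level0.
- by move=> n Hn A B; apply: level1.
- move=> n Hn A B; apply: level_zero; [exact: c2 | by rewrite muln_gt0 andbT -ltnS prednK // ltnW | exact: anti2].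
- by move=> A B; apply: level_zero; [exact: c3 | by [] | exact: anti3].
Qed.
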